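(* Let $(A,\alpha)$ be an $I$-Galois object for a Hopf algebra $(H,\Delta)$ with invariant functionals, and $i,j\in I$. Then either $A_{ij}=A_{ji}=0$, or $(A_{ij},A_{ji})$ (with the multiplication of $A$) is a strict $H$-equivariant Morita context between $A_{ii}$ and $A_{jj}$.
   Context: $H$ has invariant functionals: nonzero $\varphi,\psi:H\to k$ with $(\mathrm{id}\otimes\varphi)\Delta(h)=\varphi(h)1$, $(\psi\otimes\mathrm{id})\Delta(h)=\psi(h)1$. An $I$-Galois object is a right $H$-comodule algebra $(A,\alpha)$ (possibly non-unital) whose Galois map $A\otimes_{A^\alpha}A\to A\otimes H$, $a\otimes b\mapsto(a\otimes1)\alpha(b)$, is bijective and whose coinvariant algebra $A^\alpha$ is identified with $k_I=\bigoplus_{i\in I}k$, with minimal idempotents $p_i$; $A_{ij}=p_iAp_j$, and $\alpha$ restricts to each $A_{ij}$. An $H$-equivariant Morita context between comodule algebras $A_{11},A_{22}$ is a Morita context $\{A_{ij}\}$ (associative multiplications $A_{ij}\times A_{jl}\to A_{il}$) in which all $A_{ij}$ are comodules and multiplications are comodule maps; strict if all maps $A_{ij}\otimes_{A_{jj}}A_{ji}\to A_{ii}$ are isomorphisms. *)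

(* Defs.v *)
(* Tensor products of (possibly infinite-dimensional)
   vector spaces are not in MathComp: they are represented by their universal
   property (a tensor product is *any* bilinear map with the universal property;
   all notions below are invariant under the choice). *)
From HB Require Import structures.
From mathcomp Require Import all_boot all_order all_algebra.
From Stdlib Require Import ClassicalEpsilon.
Set Implicit Arguments.
Unset Strict Implicit.
Unset Printing Implicit Defensive.
Import GRing.Theory.
Local Open Scope ring_scope.

Section Defs.
Variable k : fieldType.

Definition lin (U V : lmodType k) (f : U -> V) : Prop :=
  forall (c : k) (x y : U), f (c *: x + y) = c *: f x + f y.

Definition linf (U : lmodType k) (f : U -> k) : Prop :=
  forall (c : k) (x y : U), f (c *: x + y) = c * f x + f y.

Definition bilin (U V W : lmodType k) (b : U -> V -> W) : Prop :=
  (forall u, lin (b u)) /\ (forall v, lin (fun u => b u v)).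

Definition trilin (U V W Z : lmodType k) (b : U -> V -> W -> Z) : Prop :=
  (forall u v, lin (b u v)) /\ (forall u w, lin (fun v => b u v w)) /\
  (forall v w, lin (fun u => b u v w)).

Definition is_tensor (U V T : lmodType k) (t : U -> V -> T) : Prop :=
  bilin t /\
  forall (X : lmodType k) (b : U -> V -> X), bilin b ->
    exists f : T -> X, [/\ lin f, (forall u v, f (t u v) = b u v) &
      forall g : T -> X, lin g -> (forall u v, g (t u v) = b u v) -> g =1 f].

Definition is_tensor3 (U V W T : lmodType k) (t : U -> V -> W -> T) : Prop :=
  trilin t /\
  forall (X : lmodType k) (b : U -> V -> W -> X), trilin b ->
    exists f : T -> X, [/\ lin f, (forall u v w, f (t u v w) = b u v w) &
      forall g : T -> X, lin g -> (forall u v w, g (t u v w) = b u v w) -> g =1 f].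

Record tensor_prod (U V : lmodType k) := TensorProd {
  tp_carrier : lmodType k;
  tp_t : U -> V -> tp_carrier;
  tp_univ : is_tensor tp_t }.

Record tensor_prod3 (U V W : lmodType k) := TensorProd3 {
  tp3_carrier : lmodType k;
  tp3_t : U -> V -> W -> tp3_carrier;
  tp3_univ : is_tensor3 tp3_t }.

(* The linear map T -> X induced by a bilinear map b (the unique linear f with
   f (u (x) v) = b u v; chosen by Hilbert's epsilon, well-defined for bilinear b). *)
Definition tlift (U V T X : lmodType k) (t : U -> V -> T) (b : U -> V -> X) : T -> X :=
  epsilon (inhabits (fun _ : T => (0 : X)))
    (fun f => lin f /\ forall u v, f (t u v) = b u v).

(* product on U (x) V of two (possibly non-unital) algebras:
   (a (x) b)(c (x) d) = ac (x) bd *)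
Definition tmul (U V T : lmodType k) (t : U -> V -> T)
    (mU : U -> U -> U) (mV : V -> V -> V) (x y : T) : T :=
  tlift t (fun a b => tlift t (fun c d => t (mU a c) (mV b d)) y) x.

Definition is_hopf (H : algType k) (T2 : tensor_prod H H) (T3 : tensor_prod3 H H H)
    (D : H -> tp_carrier T2) (eps : H -> k) (S : H -> H) : Prop :=
  let t := tp_t T2 in let t3 := tp3_t T3 in
  [/\ lin D /\ linf eps /\ lin S,
   (* coassociativity (D (x) id) D = (id (x) D) D *)
   (forall h, tlift t (fun a b => tlift t (fun a1 a2 => t3 a1 a2 b) (D a)) (D h) =
              tlift t (fun a b => tlift t (fun b1 b2 => t3 a b1 b2) (D b)) (D h)),
   (forall h, tlift t (fun a b => eps a *: b) (D h) = h) /\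
   (forall h, tlift t (fun a b => eps b *: a) (D h) = h),
   ((forall g h, D (g * h) = tmul t *%R *%R (D g) (D h)) /\ D 1 = t 1 1) /\
   ((forall g h, eps (g * h) = eps g * eps h) /\ eps 1 = 1) &
   (forall h, tlift t (fun a b => S a * b) (D h) = eps h *: 1) /\
   (forall h, tlift t (fun a b => a * S b) (D h) = eps h *: 1)].

Definition left_invariant (H : algType k) (T2 : tensor_prod H H)
    (D : H -> tp_carrier T2) (phi : H -> k) : Prop :=
  [/\ linf phi, exists h, phi h != 0 &
      forall h, tlift (tp_t T2) (fun a b => phi b *: a) (D h) = phi h *: 1].

Definition right_invariant (H : algType k) (T2 : tensor_prod H H)
    (D : H -> tp_carrier T2) (psi : H -> k) : Prop :=
  [/\ linf psi, exists h, psi h != 0 &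
      forall h, tlift (tp_t T2) (fun a b => psi a *: b) (D h) = psi h *: 1].

Definition is_nualg (A : lmodType k) (m : A -> A -> A) : Prop :=
  bilin m /\ forall x y z, m x (m y z) = m (m x y) z.

Definition is_comodule_algebra (H : algType k) (T2 : tensor_prod H H)
    (D : H -> tp_carrier T2) (eps : H -> k)
    (A : lmodType k) (m : A -> A -> A)
    (TA : tensor_prod A H) (TA3 : tensor_prod3 A H H)
    (alpha : A -> tp_carrier TA) : Prop :=
  let t := tp_t TA in let t3 := tp3_t TA3 in
  [/\ is_nualg m, lin alpha,
   (forall x y, alpha (m x y) = tmul t m *%R (alpha x) (alpha y)),
   (* (alpha (x) id) alpha = (id (x) D) alpha *)
   (forall x, tlift t (fun a h => tlift t (fun a' h' => t3 a' h' h) (alpha a)) (alpha x) =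
              tlift t (fun a h => tlift (tp_t T2) (fun h1 h2 => t3 a h1 h2) (D h)) (alpha x)) &
   (forall x, tlift t (fun a h => eps h *: a) (alpha x) = x)].

Definition coinvariant (H : algType k) (A : lmodType k) (TA : tensor_prod A H)
    (alpha : A -> tp_carrier TA) (a : A) : Prop :=
  alpha a = tp_t TA a 1.

Definition subspace (A : lmodType k) (P : A -> Prop) : Prop :=
  P 0 /\ forall c x y, P x -> P y -> P (c *: x + y).

(* Universal balanced bilinear map: for subspaces P, Q of A and a subalgebra S,
   the bilinear, S-balanced map mm : P x Q -> T (with values in the subspace R)
   induces a linear bijection  P (x)_S Q -> R.  (Unfolding of the universal
   property of the balanced tensor product P (x)_S Q.) *)
Definition balanced_iso (A : lmodType k) (m : A -> A -> A)
    (P Q S : A -> Prop) (T : lmodType k) (R : T -> Prop) (mm : A -> A -> T) : Prop :=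
  (forall x y, P x -> Q y -> R (mm x y)) /\
  forall (X : lmodType k) (b : A -> A -> X),
    (forall c x y y', P x -> Q y -> Q y' -> b x (c *: y + y') = c *: b x y + b x y') ->
    (forall c x x' y, P x -> P x' -> Q y -> b (c *: x + x') y = c *: b x y + b x' y) ->
    (forall x s y, P x -> S s -> Q y -> b (m x s) y = b x (m s y)) ->
    exists f : T -> X, [/\ lin f, (forall x y, P x -> Q y -> f (mm x y) = b x y) &
      forall g : T -> X, lin g -> (forall x y, P x -> Q y -> g (mm x y) = b x y) ->
        forall z, R z -> g z = f z].

Definition is_I_galois_object (H : algType k) (T2 : tensor_prod H H)
    (D : H -> tp_carrier T2) (eps : H -> k)
    (A : lmodType k) (m : A -> A -> A)
    (TA : tensor_prod A H) (TA3 : tensor_prod3 A H H)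
    (alpha : A -> tp_carrier TA) (I : Type) (p : I -> A) : Prop :=
  [/\ is_comodule_algebra D eps m TA3 alpha,
   (* bijectivity of the Galois map A (x)_{A^alpha} A -> A (x) H,
      a (x) b |-> (a (x) 1) alpha(b) *)
   balanced_iso m (fun _ => True) (fun _ => True) (coinvariant alpha)
     (fun _ => True) (fun a b => tmul (tp_t TA) m *%R (tp_t TA a 1) (alpha b)),
   (* A^alpha identified with k_I, the p i being its minimal idempotents:
      the p i are nonzero, pairwise orthogonal idempotent coinvariants, and they
      span A^alpha *)
   (forall i, coinvariant alpha (p i) /\ p i != 0),
   (forall i, m (p i) (p i) = p i) /\ (forall i j, i <> j -> m (p i) (p j) = 0) &
   (forall a, coinvariant alpha a -> exists s : seq (k * I),
      a = \sum_(x <- s) x.1 *: p x.2)].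

Definition Aij (A : lmodType k) (m : A -> A -> A) (I : Type) (p : I -> A) (i j : I)
    (a : A) : Prop :=
  exists x, a = m (m (p i) x) (p j).

Definition in_sub_tensor (H : algType k) (A : lmodType k) (TA : tensor_prod A H)
    (P : A -> Prop) (z : tp_carrier TA) : Prop :=
  exists s : seq (A * H), (forall x, x \in s -> P x.1) /\
    z = \sum_(x <- s) tp_t TA x.1 x.2.

(* H-equivariant Morita context {M a b}_{a,b : J} formed by subspaces of the
   comodule algebra (A, alpha) with the multiplication of A (associativity and
   the fact that the multiplications are comodule maps are then inherited from
   A and alpha); strict = all multiplication maps
   M a b (x)_{M b b} M b a -> M a a are isomorphisms. *)
Definition strict_equivariant_morita_context (H : algType k) (A : lmodType k)
    (m : A -> A -> A) (TA : tensor_prod A H) (alpha : A -> tp_carrier TA)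
    (J : Type) (M : J -> J -> A -> Prop) : Prop :=
  [/\ (forall a b, subspace (M a b)),
      (forall a b c x y, M a b x -> M b c y -> M a c (m x y)),
      (forall a b x, M a b x -> @in_sub_tensor H A TA (M a b) (alpha x)) &
      (forall a b, balanced_iso m (M a b) (M b a) (M b b) (M a a) m)].

End Defs.

(* Main.v *)
Require Import Defs.
From HB Require Import structures.
From mathcomp Require Import all_boot all_order all_algebra.
From mathcomp Require classical_sets.
From Stdlib Require Import Classical ClassicalEpsilon FunctionalExtensionality.
Set Implicit Arguments.
Unset Strict Implicit.
Unset Printing Implicit Defensive.
Import GRing.Theory.
Local Open Scope ring_scope.

Section Lin.
Variable k : fieldType.
Implicit Types U V W X : lmodType k.

Lemma lin0 U V (f : U -> V) : lin f -> f 0 = 0.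
Proof.
move=> hf; have h := hf 1 0 0; rewrite !scale1r addr0 in h.
by apply: (addrI (f 0)); rewrite addr0 -h.
Qed.

Lemma linD U V (f : U -> V) : lin f -> forall x y, f (x + y) = f x + f y.
Proof. by move=> hf x y; have := hf 1 x y; rewrite !scale1r. Qed.

Lemma linZ U V (f : U -> V) : lin f -> forall c x, f (c *: x) = c *: f x.
Proof. by move=> hf c x; have := hf c x 0; rewrite addr0 (lin0 hf) addr0. Qed.

Lemma linN U V (f : U -> V) : lin f -> forall x, f (- x) = - f x.
Proof. by move=> hf x; rewrite -scaleN1r linZ // scaleN1r. Qed.

Lemma lin_sum U V (f : U -> V) I (s : seq I) (F : I -> U) : lin f ->
  f (\sum_(i <- s) F i) = \sum_(i <- s) f (F i).
Proof.
move=> hf; elim: s => [|a s IH]; first by rewrite !big_nil lin0.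
by rewrite !big_cons linD // IH.
Qed.

Lemma lin_comp U V W (f : U -> V) (g : V -> W) : lin f -> lin g -> lin (g \o f).
Proof. by move=> hf hg c x y /=; rewrite hf hg. Qed.

Lemma lin_comb U V (f g : U -> V) c : lin f -> lin g -> lin (fun x => c *: f x + g x).
Proof.
move=> hf hg d x y; rewrite hf hg !scalerDr !scalerA mulrC.
by rewrite addrACA.
Qed.

Lemma lin_sumf U V I (s : seq I) (F : I -> U -> V) :
  (forall i, lin (F i)) -> lin (fun x => \sum_(i <- s) F i x).
Proof.
move=> hF c x y; elim: s => [|a s IH]; first by rewrite !big_nil scaler0 addr0.
by rewrite !big_cons IH hF scalerDr addrACA.
Qed.

Lemma lin_sumf_in U V (I : eqType) (s : seq I) (F : I -> U -> V) :
  (forall i, i \in s -> lin (F i)) -> lin (fun x => \sum_(i <- s) F i x).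
Proof.
move=> hF c x y; elim: s hF => [|a s IH] hF; first by rewrite !big_nil scaler0 addr0.
rewrite !big_cons IH; last by move=> i ins; apply: hF; rewrite inE ins orbT.
rewrite hF; last by rewrite inE eqxx.
by rewrite scalerDr addrACA.
Qed.

Lemma bilin_comb U V W (F G : U -> V -> W) c : bilin F -> bilin G ->
  bilin (fun u v => c *: F u v + G u v).
Proof.
move=> [F1 F2] [G1 G2]; split => [u|v]; first exact: lin_comb.
exact: (lin_comb c (F2 v) (G2 v)).
Qed.

End Lin.
Section Sep.
Variable k : fieldType.

Lemma functional_sep (T : lmodType k) (V : T -> Prop) (z : T) :
  subspace V -> ~ V z -> exists w : T -> k,
    (forall c x y, w (c *: x + y) = c * w x + w y) /\
    (forall v, V v -> w v = 0) /\ w z = 1.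
Proof.
move=> [V0 Vl] nVz.
pose P := fun W : T -> Prop => (forall x, ~ W x) \/
   (subspace W /\ (forall v, V v -> W v) /\ ~ W z).
have [A [PA Amax]] : exists A, P A /\ forall B, classical_sets.proper A B -> ~ P B.
  apply: classical_sets.Zorn_bigcup => F FP Ftot.
  case: (classic (exists x, classical_sets.bigcup F id x)) => [[x [X FX Xx]]|nx]; last first.
    by left => x hx; apply: nx; exists x.
  have sX : subspace X /\ (forall v, V v -> X v) /\ ~ X z.
    by case: (FP X FX) => [h|h] //; case: (h x Xx).
  right; split; [split|split].
  - by exists X => //; exact: sX.1.1.
  - move=> c u v [U FU Uu] [W FW Ww].
    case: (Ftot U W FU FW) => [UW|WU].
    + have sW : subspace W by case: (FP W FW) => [h|h]; [case: (h v Ww)|exact: h.1].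
      by exists W => //; apply: sW.2 => //; apply: UW.
    + have sU : subspace U by case: (FP U FU) => [h|h]; [case: (h u Uu)|exact: h.1].
      by exists U => //; apply: sU.2 => //; apply: WU.
  - by move=> v Vv; exists X => //; apply: sX.2.1.
  - move=> [U FU Uz].
    by case: (FP U FU) => [h|[_ [_ h]]]; [case: (h z Uz)| exact: h Uz].
have {PA} [[A0 Al] [VA nAz]] : subspace A /\ (forall v, V v -> A v) /\ ~ A z.
  case: PA => // h; exfalso; apply: (Amax V).
    by split => [x /h []|]; move=> /(_ 0 V0) /h.
  by right; split => //; split.
have hc : forall v, exists c : k, A (v - c *: z).
  move=> v; case: (classic (A v)) => [Av|nAv]; first by exists 0; rewrite scale0r subr0.
  pose B := fun u => exists c : k, exists2 w, A w & u = w + c *: v.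
  have AB : forall u, A u -> B u by move=> u Au; exists 0, u; rewrite ?scale0r ?addr0.
  have Bz : B z.
    apply: NNPP => nBz; apply: (Amax B); last first.
      right; split; last by split => // u Vu; apply: AB; apply: VA.
      split; first by exists 0, 0; rewrite ?scale0r ?addr0.
      move=> d u u' [c1 [w1 Aw1 ->]] [c2 [w2 Aw2 ->]].
      exists (d * c1 + c2), (d *: w1 + w2); first exact: (Al).
      by rewrite scalerDr !scalerA scalerDl addrACA.
    split => // hBA; apply: nAv; apply: hBA; exists 1, 0; rewrite ?scale1r ?add0r //.
  case: Bz => c [w Aw ez].
  have c0 : c != 0.
    apply/negP => /eqP c0; apply: nAz; by rewrite ez c0 scale0r addr0.
  exists c^-1.
  have -> : v - c^-1 *: z = (- c^-1) *: w + 0.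
    by rewrite ez scalerDr scalerA mulVf // scale1r addr0 opprD addrCA subrr addr0 scaleNr.
  by apply: (Al).
have uniq : forall v c c', A (v - c *: z) -> A (v - c' *: z) -> c = c'.
  move=> v c c' h1 h2; apply: NNPP => ne; apply: nAz.
  have : A ((c' - c)^-1 *: (v - c *: z) + (- (c' - c)^-1) *: (v - c' *: z)).
    by apply: (Al) => //; rewrite -[X in A X]addr0; apply: (Al).
  suff -> : (c' - c)^-1 *: (v - c *: z) + - (c' - c)^-1 *: (v - c' *: z) = z by [].
  rewrite scaleNr -scalerBr.
  have -> : v - c *: z - (v - c' *: z) = (c' - c) *: z.
    by rewrite opprD opprK addrACA subrr add0r addrC scalerBl.
  rewrite scalerA mulVf ?scale1r //.
  by rewrite subr_eq0; apply/eqP => e; apply: ne.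
pose w v := epsilon (inhabits (0:k)) (fun c => A (v - c *: z)).
have wP : forall v, A (v - w v *: z) by move=> v; exact: (epsilon_spec (inhabits (0:k)) (fun c => A (v - c *: z)) (hc v)).
exists w; split; [|split].
- move=> c x y; apply: (uniq (c *: x + y)); first exact: wP.
  have -> : c *: x + y - (c * w x + w y) *: z = c *: (x - w x *: z) + (y - w y *: z).
    by rewrite scalerDl scalerBr scalerA opprD addrACA.
  by apply: (Al); apply: wP.
- move=> v Vv; apply: (uniq v); first exact: wP.
  by rewrite scale0r subr0; apply: VA.
- apply: (uniq z); first exact: wP.
  by rewrite scale1r subrr.
Qed.
End Sep.

Section Tensor.
Variable k : fieldType.
Variables (U V T : lmodType k) (t : U -> V -> T) (tT : is_tensor t).

Lemma t_lin1 v : lin (fun u => t u v).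
Proof. exact: tT.1.2. Qed.
Lemma t_lin2 u : lin (t u).
Proof. exact: tT.1.1. Qed.

Lemma tlift_spec (X : lmodType k) (b : U -> V -> X) : bilin b ->
  lin (tlift t b) /\ forall u v, tlift t b (t u v) = b u v.
Proof.
move=> hb; have [f [hf ft _]] := tT.2 X b hb; rewrite /tlift.
exact: (epsilon_spec (inhabits (fun _ : T => (0 : X)))
    (fun f => lin f /\ forall u v, f (t u v) = b u v) (ex_intro _ f (conj hf ft))).
Qed.

Lemma tensor_span z : exists s : seq (U * V), z = \sum_(x <- s) t x.1 x.2.
Proof.
apply: NNPP => nz.
pose P := fun z => exists s : seq (U * V), z = \sum_(x <- s) t x.1 x.2.
have sP : subspace P.
  split; first by exists [::]; rewrite big_nil.
  move=> c x0 y0 [s1 ->] [s2 ->].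
  exists ([seq (c *: x.1, x.2) | x <- s1] ++ s2).
  rewrite big_cat big_map /= scaler_sumr; congr (_ + _).
  by apply: eq_bigr => x _; rewrite (linZ (t_lin1 _)).
have [w [wl [wP wz]]] := functional_sep sP nz.
have hb : bilin (fun (_ : U) (_ : V) => (0 : k^o)).
  by split => ? ? ? ?; rewrite scaler0 addr0.
have [f [_ _ fu]] := tT.2 _ _ hb.
have e1 := fu (w : T -> k^o) wl (fun u v => wP _ (ex_intro _ [:: (u, v)] (esym (big_seq1 _ _ _)))) z.
have e2 := fu (fun _ => (0 : k^o)) (fun c x y => etrans (esym (addr0 _)) (congr1 (fun a => a + 0) (esym (scaler0 _ c)))) (fun _ _ => erefl) z.
- by move: wz; rewrite e1 -e2 => /eqP; rewrite eq_sym oner_eq0.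
Qed.

Lemma lin_ext (X : lmodType k) (g1 g2 : T -> X) : lin g1 -> lin g2 ->
  (forall u v, g1 (t u v) = g2 (t u v)) -> g1 =1 g2.
Proof.
move=> h1 h2 e z; have [s ->] := tensor_span z.
by rewrite !lin_sum //; apply: eq_bigr => x _; apply: e.
Qed.

Lemma tlift_comb (X : lmodType k) (F G : U -> V -> X) c : bilin F -> bilin G ->
  forall z, tlift t (fun u v => c *: F u v + G u v) z = c *: tlift t F z + tlift t G z.
Proof.
move=> hF hG; have [l1 s1] := tlift_spec hF; have [l2 s2] := tlift_spec hG.
have [l3 s3] := tlift_spec (bilin_comb c hF hG).
apply: lin_ext => //; first exact: lin_comb.
by move=> u v; rewrite s1 s2 s3.
Qed.

End Tensor.

Section Tmul.
Variable k : fieldType.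
Variables (U V T : lmodType k) (t : U -> V -> T) (tT : is_tensor t).
Variables (mU : U -> U -> U) (mV : V -> V -> V) (hU : bilin mU) (hV : bilin mV).

Let inner a b := fun c d => t (mU a c) (mV b d).

Lemma inner_bilin a b : bilin (inner a b).
Proof.
split => [c|d] e x y; rewrite /inner.
- by rewrite (hV.1 b) (t_lin2 tT).
- by rewrite (hU.1 a) (t_lin1 tT).
Qed.

Lemma outer_bilin y : bilin (fun a b => tlift t (inner a b) y).
Proof.
split => [a|b] c x x'.
- have -> : inner a (c *: x + x') = fun c0 d => c *: inner a x c0 d + inner a x' c0 d.
    apply: functional_extensionality => c0; apply: functional_extensionality => d.
    by rewrite /inner (hV.2 d) (t_lin2 tT).
  exact: (tlift_comb tT c (inner_bilin a x) (inner_bilin a x')).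
- have -> : inner (c *: x + x') b = fun c0 d => c *: inner x b c0 d + inner x' b c0 d.
    apply: functional_extensionality => c0; apply: functional_extensionality => d.
    by rewrite /inner (hU.2 c0) (t_lin1 tT).
  exact: (tlift_comb tT c (inner_bilin x b) (inner_bilin x' b)).
Qed.

Lemma tmul_lin1 y : lin (fun x => tmul t mU mV x y).
Proof. exact: (tlift_spec tT (outer_bilin y)).1. Qed.

Lemma tmul_t1 a b y : tmul t mU mV (t a b) y = tlift t (inner a b) y.
Proof. exact: (tlift_spec tT (outer_bilin y)).2. Qed.

Lemma tmul_tt a b c d : tmul t mU mV (t a b) (t c d) = t (mU a c) (mV b d).
Proof. by rewrite tmul_t1 (tlift_spec tT (inner_bilin a b)).2. Qed.

Lemma tmul_lin2 x : lin (tmul t mU mV x).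
Proof.
have [s ->] := tensor_span tT x.
have -> : tmul t mU mV (\sum_(x <- s) t x.1 x.2) =
          fun y => \sum_(x <- s) tlift t (inner x.1 x.2) y.
  apply: functional_extensionality => y.
  rewrite (lin_sum _ _ (tmul_lin1 y)); apply: eq_bigr => e _.
  exact: tmul_t1.
by apply: lin_sumf => e; exact: (tlift_spec tT (inner_bilin _ _)).1.
Qed.

End Tmul.

Section Alg.
Variable k : fieldType.
Variables (A : lmodType k) (m : A -> A -> A) (hm : is_nualg m).
Variables (I : Type) (p : I -> A).
Hypothesis pidem : forall i, m (p i) (p i) = p i.
Hypothesis porth : forall i j, i <> j -> m (p i) (p j) = 0.

Lemma mA x y z : m x (m y z) = m (m x y) z.
Proof. exact: hm.2. Qed.
Lemma mlinr x : lin (m x). Proof. exact: hm.1.1. Qed.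
Lemma mlinl y : lin (fun x => m x y). Proof. exact: hm.1.2. Qed.
Lemma m0r x : m x 0 = 0. Proof. exact: lin0 (mlinr x). Qed.
Lemma m0l y : m 0 y = 0. Proof. exact: lin0 (mlinl y). Qed.
Lemma mZr x c y : m x (c *: y) = c *: m x y. Proof. by rewrite (linZ (mlinr x)). Qed.
Lemma mZl x c y : m (c *: x) y = c *: m x y. Proof. by rewrite (linZ (mlinl y)). Qed.
Lemma msumr x J (s : seq J) F : m x (\sum_(e <- s) F e) = \sum_(e <- s) m x (F e).
Proof. exact: lin_sum (mlinr x). Qed.
Lemma msuml y J (s : seq J) F : m (\sum_(e <- s) F e) y = \sum_(e <- s) m (F e) y.
Proof. exact: (lin_sum _ _ (mlinl y)). Qed.

Local Notation P := (Aij m p).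

Lemma P_def i j x : P i j (m (m (p i) x) (p j)).
Proof. by exists x. Qed.

Lemma P_absl i j a : P i j a -> m (p i) a = a.
Proof. by move=> [x ->]; rewrite !mA pidem. Qed.
Lemma P_absr i j a : P i j a -> m a (p j) = a.
Proof. by move=> [x ->]; rewrite -!mA pidem. Qed.

Lemma P_mul i j l x y : P i j x -> P j l y -> P i l (m x y).
Proof.
move=> hx hy; exists (m x y).
by rewrite mA (P_absl hx) -mA (P_absr hy).
Qed.

Lemma P_sub i j : subspace (P i j).
Proof.
split; first by exists 0; rewrite m0r m0l.
move=> c x y [x' ->] [y' ->]; exists (c *: x' + y').
by rewrite (mlinr _ c) (mlinl _ c).
Qed.

Lemma sub_sum (Q : A -> Prop) (J : eqType) (s : seq J) (F : J -> A) : subspace Q ->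
  (forall e, e \in s -> Q (F e)) -> Q (\sum_(e <- s) F e).
Proof.
move=> [Q0 Ql]; elim: s => [|a s IH] h; first by rewrite big_nil.
rewrite big_cons -[F a]scale1r; apply: Ql; first by apply: h; rewrite inE eqxx.
by apply: IH => e es; apply: h; rewrite inE es orbT.
Qed.

Lemma sub_scale (Q : A -> Prop) c x : subspace Q -> Q x -> Q (c *: x).
Proof. by move=> [Q0 Ql] qx; rewrite -[_ *: _]addr0; apply: Ql. Qed.


Definition Jsum i j z := exists s : seq (A * A),
  (forall e, e \in s -> P i j e.1 /\ P j i e.2) /\ z = \sum_(e <- s) m e.1 e.2.

Lemma b_sumr (X : lmodType k) (Q : A -> Prop) (b : A -> A -> X) x (s : seq (A * A)) (F : A * A -> A) :
  subspace Q ->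
  (forall c y y', Q y -> Q y' -> b x (c *: y + y') = c *: b x y + b x y') ->
  (forall e, e \in s -> Q (F e)) ->
  b x (\sum_(e <- s) F e) = \sum_(e <- s) b x (F e).
Proof.
move=> sQ hb; elim: s => [|a s IH] h.
  rewrite !big_nil; have e := hb 1 0 0 sQ.1 sQ.1; rewrite !scale1r addr0 in e.
  by apply: (addrI (b x 0)); rewrite addr0 -e.
have hs : forall e, e \in s -> Q (F e) by move=> e es; apply: h; rewrite inE es orbT.
rewrite !big_cons -IH // -[F a]scale1r hb ?scale1r //; first by apply: h; rewrite inE eqxx.
exact: sub_sum.
Qed.

Lemma bal_of_J i j : Jsum i j (p i) -> balanced_iso m (P i j) (P j i) (P j j) (P i i) m.
Proof.
move=> [s [hs ps]]; split; first by move=> x y; apply: P_mul.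
move=> X b hb2 hb1 hbal.
pose f := fun z => \sum_(e <- s) b (m (m (m (p i) z) (p i)) e.1) e.2.
have inP : forall z e, e \in s -> P i j (m (m (m (p i) z) (p i)) e.1).
  by move=> z e es; apply: (P_mul (P_def _ _ _)); exact: (hs e es).1.
exists f; split.
- apply: lin_sumf_in => e es c z z'.
  rewrite -(hb1 c _ _ _ (inP z _ es) (inP z' _ es) (hs e es).2); congr (b _ _).
  by rewrite (mlinr _ c) (mlinl _ c) (mlinl _ c).
- move=> x y hx hy; rewrite /f.
  have hxy := P_mul hx hy; rewrite (P_absl hxy) (P_absr hxy).
  transitivity (\sum_(e <- s) b x (m (m y e.1) e.2)).
    apply: eq_big_seq => e es; rewrite -mA; apply: hbal => //.
      exact: P_mul hy (hs e es).1.
    exact: (hs e es).2.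
  rewrite -(@b_sumr X (P j i) b x s (fun e => m (m y e.1) e.2) (P_sub j i)).
  + congr (b x _); rewrite -{2}(P_absr hy) ps msumr.
    by apply: eq_bigr => e _; rewrite mA.
  + by move=> c y1 y2 q1 q2; apply: hb2.
  + by move=> e es; apply: (P_mul (P_mul hy (hs e es).1) (hs e es).2).
- move=> g hg gm z hz.
  have ez : z = \sum_(e <- s) m (m z e.1) e.2.
    rewrite -{1}(P_absr hz) ps msumr.
    by apply: eq_bigr => e _; rewrite mA.
  rewrite {1}ez (lin_sum _ _ hg) /f (P_absl hz) (P_absr hz).
  apply: eq_big_seq => e es; apply: gm; last exact: (hs e es).2.
  exact: P_mul hz (hs e es).1.
Qed.

Lemma Jsum_single i j x y : P i j x -> P j i y -> Jsum i j (m x y).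
Proof.
move=> hx hy; exists [:: (x, y)]; rewrite big_seq1; split => // e.
by rewrite inE => /eqP ->.
Qed.

Lemma Jsum_sub i j : subspace (Jsum i j).
Proof.
split; first by exists [::]; rewrite big_nil.
move=> c x0 y0 [s1 [h1 ->]] [s2 [h2 ->]].
exists ([seq (c *: e.1, e.2) | e <- s1] ++ s2); split.
- move=> e; rewrite mem_cat => /orP [/mapP [x xs ->]|es]; last exact: h2.
  by have [hx hy] := h1 x xs; split => //; apply: sub_scale => //; apply: P_sub.
- rewrite big_cat big_map /= scaler_sumr; congr (_ + _).
  by apply: eq_bigr => x _; rewrite mZl.
Qed.

Lemma J_nz i j : p i != 0 -> Jsum i j (p i) -> exists y, P j i y /\ y != 0.
Proof.
move=> pnz [s [hs ps]]; apply: NNPP => ny.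
move/eqP: pnz; apply; rewrite ps big1_seq // => e es.
have [_ hy] := hs e es; case: (classic (e.2 = 0)) => [->|ne]; first by rewrite m0r.
by exfalso; apply: ny; exists e.2; split => //; apply/eqP.
Qed.
End Alg.

Section Gal.
Variable k : fieldType.
Variables (H : algType k) (A : lmodType k) (m : A -> A -> A) (hm : is_nualg m).
Variables (TA : tensor_prod A H) (alpha : A -> tp_carrier TA) (I : Type) (p : I -> A).
Hypothesis halpha : lin alpha.
Hypothesis amul : forall x y, alpha (m x y) = tmul (tp_t TA) m *%R (alpha x) (alpha y).
Hypothesis pco : forall i, coinvariant alpha (p i).
Hypothesis pnz : forall i, p i != 0.
Hypothesis pidem : forall i, m (p i) (p i) = p i.
Hypothesis porth : forall i j, i <> j -> m (p i) (p j) = 0.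
Hypothesis pspan : forall a, coinvariant alpha a -> exists s : seq (k * I),
      a = \sum_(x <- s) x.1 *: p x.2.
Hypothesis gal : balanced_iso m (fun _ => True) (fun _ => True) (coinvariant alpha)
     (fun _ => True) (fun a b => tmul (tp_t TA) m *%R (tp_t TA a 1) (alpha b)).

Local Notation t := (tp_t TA).
Local Notation tT := (tp_univ TA).
Local Notation P := (Aij m p).

Lemma hH : bilin ( *%R : H -> H -> H).
Proof.
split => [x|y] c a b /=; first by rewrite mulrDr scalerAr.
by rewrite mulrDl scalerAl.
Qed.

Local Notation tm := (tmul t m *%R).
Definition gam x y := tm (t x 1) (alpha y).

Lemma tmL1 y : lin (fun x => tm x y). Proof. exact (tmul_lin1 tT hm.1 hH y). Qed.
Lemma tmL2 x : lin (tm x). Proof. exact (tmul_lin2 tT hm.1 hH x). Qed.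
Lemma tmTT a b c d : tm (t a b) (t c d) = t (m a c) (b * d).
Proof. exact (tmul_tt tT hm.1 hH a b c d). Qed.

Lemma coinv_scalar s : coinvariant alpha s -> forall i, exists c : k,
  m (p i) s = c *: p i /\ m s (p i) = c *: p i.
Proof.
move=> /pspan [l ->] i.
pose d (e : k * I) : k := if excluded_middle_informative (i = e.2) then 1 else 0.
have h1 : forall e, m (p i) (p e.2) = d e *: p i.
  move=> e; rewrite /d; case: excluded_middle_informative => [eq|ne] /=.
  - by rewrite -eq pidem scale1r.
  - by rewrite porth // scale0r.
have h2 : forall e, m (p e.2) (p i) = d e *: p i.
  move=> e; rewrite /d; case: excluded_middle_informative => [eq|ne] /=.
  - by rewrite -eq pidem scale1r.
  - by rewrite porth ?scale0r // => eq; apply: ne.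
exists (\sum_(e <- l) e.1 * d e); rewrite scaler_suml; split.
- rewrite (msumr hm); apply: eq_bigr => e _; by rewrite (mZr hm) h1 scalerA.
- rewrite (msuml hm); apply: eq_bigr => e _; by rewrite (mZl hm) h2 scalerA.
Qed.

Lemma gamZ c x y : gam (c *: x) y = c *: gam x y.
Proof. by rewrite /gam (linZ (t_lin1 tT 1)) (linZ (tmL1 _)). Qed.

Lemma gam_span w : exists s : seq (A * A), w = \sum_(e <- s) gam e.1 e.2.
Proof.
apply: NNPP => nw.
pose Q := fun w => exists s : seq (A * A), w = \sum_(e <- s) gam e.1 e.2.
have sQ : subspace Q.
  split; first by exists [::]; rewrite big_nil.
  move=> c x0 y0 [s1 ->] [s2 ->].
  exists ([seq (c *: x.1, x.2) | x <- s1] ++ s2).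
  rewrite big_cat big_map /= scaler_sumr; congr (_ + _).
  by apply: eq_bigr => x _; rewrite gamZ.
have [w' [wl [wP wz]]] := functional_sep sQ nw.
have [f [_ _ fu]] := gal.2 (k^o) (fun _ _ => 0)
  (fun c x y y' _ _ _ => etrans (esym (addr0 _)) (congr1 (fun a => a + 0) (esym (scaler0 _ c))))
  (fun c x x' y _ _ _ => etrans (esym (addr0 _)) (congr1 (fun a => a + 0) (esym (scaler0 _ c))))
  (fun _ _ _ _ _ _ => erefl).
have e1 := fu (w' : _ -> k^o) wl (fun u v _ _ => wP _ (ex_intro _ [:: (u, v)] (esym (big_seq1 _ _ _)))) w Logic.I.
have e2 := fu (fun _ => (0 : k^o)) (fun c x y => etrans (esym (addr0 _)) (congr1 (fun a => a + 0) (esym (scaler0 _ c)))) (fun _ _ _ _ => erefl) w Logic.I.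
by move: wz; rewrite e1 -e2 => /eqP; rewrite eq_sym oner_eq0.
Qed.

Lemma gam_assoc u x y : tm (t u 1) (gam x y) = gam (m u x) y.
Proof.
rewrite /gam; move: (alpha y) => w.
apply: (lin_ext tT (g1 := fun w => tm (t u 1) (tm (t x 1) w))) => //.
- exact: (lin_comp (tmL2 _) (tmL2 _)).
- exact: tmL2.
- by move=> c h; rewrite !tmTT !mul1r (mA hm).
Qed.


Lemma pc i : alpha (p i) = t (p i) 1. Proof. exact: pco i. Qed.

Lemma alpha_sub i j a : P i j a ->
  exists s : seq (A * H), (forall e, e \in s -> P i j e.1) /\
    alpha a = \sum_(e <- s) t e.1 e.2.
Proof.
move=> ha; have [s es] := tensor_span tT (alpha a).
exists [seq (m (m (p i) e.1) (p j), e.2) | e <- s]; split.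
  by move=> e /mapP [x _ ->]; exact: P_def.
have -> : alpha a = alpha (m (m (p i) a) (p j)).
  by rewrite (P_absl hm pidem ha) (P_absr hm pidem ha).
rewrite !amul !pc es (lin_sum _ _ (tmL2 _)) (lin_sum _ _ (tmL1 _)) big_map.
by apply: eq_bigr => e _; rewrite !tmTT mul1r mulr1.
Qed.

Lemma key i j a : P i j a -> a != 0 -> Jsum m p i j (p i).
Proof.
move=> ha anz.
have sV : subspace (fun v : A => v = 0).
  by split => // c x y -> ->; rewrite scaler0 addr0.
have na : ~ a = 0 by move=> e; move: anz; rewrite e eqxx.
have [w [wl [_ wa]]] := functional_sep sV na.
have wl' : lin (w : A -> k^o) := wl.
pose b := fun x y : A => w (m (m (p i) y) (p j)) *: m x (p i).
have [f [fl fg _]] := gal.2 A b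
  (fun c x y y' _ _ _ => ltac:(rewrite /b (mlinr hm) (mlinl hm) wl scalerDl -scalerA //))
  (fun c x x' y _ _ _ => ltac:(rewrite /b (mlinl hm) scalerDr scalerA; congr (_ + _);
                               by rewrite scalerA mulrC))
  (fun x s y _ cs _ => ltac:(
     have [c [e1 e2]] := coinv_scalar cs i;
     rewrite /b -(mA hm x s) e2 (mZr hm) (mA hm (p i) s y) e1 (mZl hm) (mZl hm)
             (linZ wl') scalerA mulrC //)).
have fa : f (alpha a) = p i.
  have <- : gam (p i) a = alpha a by rewrite /gam -pc -amul (P_absl hm pidem ha).
  rewrite (fg (p i) a Logic.I Logic.I) /b (P_absl hm pidem ha) (P_absr hm pidem ha).
  by rewrite pidem wa scale1r.
have [s [sP es]] := alpha_sub ha.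
rewrite -fa es (lin_sum _ _ fl); apply: sub_sum; first exact: Jsum_sub.
move=> e es'; have hu := sP e es'.
have -> : t e.1 e.2 = tm (t e.1 1) (t (p j) e.2).
  by rewrite tmTT mul1r (P_absr hm pidem hu).
have [s2 es2] := gam_span (t (p j) e.2).
rewrite es2 (lin_sum _ _ (tmL2 _)) (lin_sum _ _ fl); apply: sub_sum; first exact: Jsum_sub.
move=> e2 _; rewrite gam_assoc fg // /b; apply: sub_scale; first exact: Jsum_sub.
have -> : m (m e.1 e2.1) (p i) = m e.1 (m (m (p j) e2.1) (p i)).
  by rewrite !(mA hm) (P_absr hm pidem hu).
by apply: Jsum_single => //; exact: P_def.
Qed.

End Gal.

Unset Implicit Arguments.

Theorem mainTheorem10 (k : fieldType) (H : algType k)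
    (T2 : tensor_prod H H) (T3 : tensor_prod3 H H H)
    (D : H -> tp_carrier T2) (eps : H -> k) (S : H -> H) (phi psi : H -> k)
    (A : lmodType k) (m : A -> A -> A)
    (TA : tensor_prod A H) (TA3 : tensor_prod3 A H H)
    (alpha : A -> tp_carrier TA) (I : Type) (p : I -> A) (i j : I) :
  is_hopf T3 D eps S ->
  left_invariant D phi -> right_invariant D psi ->
  is_I_galois_object D eps m TA3 alpha p ->
  ((forall a, Aij m p i j a -> a = 0) /\ (forall a, Aij m p j i a -> a = 0)) \/
  strict_equivariant_morita_context m alpha
    (fun (a b : bool) => Aij m p (if a then i else j) (if b then i else j)).
Proof.
move=> _ _ _ [[hm hal amul _ _] gal hpc [pidem porth] pspan].
have pco : forall i, coinvariant alpha (p i) by move=> l; exact: (hpc l).1.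
have pnz : forall i, p i != 0 by move=> l; exact: (hpc l).2.
have K := key hm amul pco pidem porth pspan gal.
have both : (exists a, Aij m p i j a /\ a != 0) \/ (exists a, Aij m p j i a /\ a != 0) ->
   Jsum m p i j (p i) /\ Jsum m p j i (p j).
  case=> [[a [ha anz]]|[a [ha anz]]].
  - have Jij := K _ _ _ ha anz.
    have [y [hy ynz]] := J_nz hm (pnz i) Jij.
    by split => //; exact: K _ _ _ hy ynz.
  - have Jji := K _ _ _ ha anz.
    have [y [hy ynz]] := J_nz hm (pnz j) Jji.
    by split => //; exact: K _ _ _ hy ynz.
case: (classic ((exists a, Aij m p i j a /\ a != 0) \/ (exists a, Aij m p j i a /\ a != 0))) => [h|nh].
- have [Jij Jji] := both h; right.
  split.
  + by move=> a b; exact: P_sub.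
  + by move=> a b c x y; exact: P_mul.
  + by move=> a b x hx; exact: (alpha_sub hm amul pco pidem hx).
  + move=> a b; apply: bal_of_J => //.
    have Jd : forall l, Jsum m p l l (p l).
      move=> l; have Pl : Aij m p l l (p l) by have := P_def m p l l (p l); rewrite !pidem.
      by have := Jsum_single Pl Pl; rewrite pidem.
    by case: a; case: b.
- left; split => a ha; apply: NNPP => nz; apply: nh.
  + by left; exists a; split => //; apply/eqP.
  + by right; exists a; split => //; apply/eqP.
Qed.
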